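(* Let $p\in(0,1)$, $\mu>0$, and let $k\ge 3$, $1\le \ell\le k-2$ and $m\ge 2$ be integers. Then there exist $n_0$ and $\alpha>0$ such that for every $n\ge n_0$ there exists a $(p,\mu)$-dense $k$-partite $k$-graph $H$, each of whose parts has exactly $n$ vertices, such that $\delta'_{\ell}(H)\ge \alpha n^{k-\ell}$ and $H$ has no $K_k(m)$-factor.
   Context: A $k$-graph $H$ has a vertex set $V(H)$ and an edge set $E(H)$ consisting of $k$-element subsets of $V(H)$. A $k$-partite $k$-graph comes with a fixed partition $V(H)=V_1\cup\dots\cup V_k$ (its parts) such that every edge meets each $V_i$ in at most one vertex. A set $S\subseteq V(H)$ is legal if $|S\cap V_i|\le 1$ for all $i$. For $S\subseteq V(H)$ with $|S|=s<k$, $\deg_H(S)$ is the number of $(k-s)$-sets $S'$ with $S\cup S'\in E(H)$. The partite minimum $s$-degree $\delta'_s(H)$ is the minimum of $\deg_H(S)$ over all legal $s$-subsets $S$. A $k$-partite $k$-graph $H$ with parts $V_1,\dots,V_k$ and $N=|V(H)|$ vertices is $(p,\mu)$-dense if for all $X_1\subseteq V_1,\dots,X_k\subseteq V_k$ we have $e_H(X_1,\dots,X_k)\ge p|X_1|\cdots|X_k|-\mu N^k$, where $e_H(X_1,\dots,X_k)$ is the number of $(x_1,\dots,x_k)\in X_1\times\dots\times X_k$ with $\{x_1,\dots,x_k\}\in E(H)$. $K_k(m)$ denotes the complete $k$-partite $k$-graph with each part of size $m$. An $F$-factor in $H$ is a set of pairwise vertex-disjoint subgraphs of $H$, each isomorphic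 to $F$, covering $V(H)$. *)

(* Defs.v *)
From HB Require Import structures.
From mathcomp Require Import all_boot all_order all_algebra.
From mathcomp Require Import reals.
Set Implicit Arguments. Unset Strict Implicit. Unset Printing Implicit Defensive.
Import Order.TTheory GRing.Theory Num.Theory.
Local Open Scope ring_scope.

(* Vertex set of a k-partite k-graph with parts of size n:
   vertex (i, j) lies in part V_i, i : 'I_k, j : 'I_n. *)
Definition vtx (k n : nat) : finType := ('I_k * 'I_n)%type.

Definition part (k n : nat) (i : 'I_k) : {set vtx k n} := [set v | v.1 == i].

Definition legal (k n : nat) (S : {set vtx k n}) : bool :=
  [forall i : 'I_k, (#|S :&: part n i| <= 1)%N].

Definition kpartite_kgraph (k n : nat) (E : {set {set vtx k n}}) : Prop :=
  forall e, e \in E -> #|e| = k /\ legal e.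

Definition deg (k n : nat) (E : {set {set vtx k n}}) (S : {set vtx k n}) : nat :=
  #|[set S' : {set vtx k n} | (#|S'| == k - #|S|)%N && (S :|: S' \in E)]|.

Definition eH (k n : nat) (E : {set {set vtx k n}}) (X : 'I_k -> {set vtx k n}) : nat :=
  #|[set x : {ffun 'I_k -> vtx k n} |
      [forall i, x i \in X i] && ([set x i | i : 'I_k] \in E)]|.

(* (p, mu)-density, with N = |V(H)| = k n. *)
Definition dense (R : realType) (p mu : R) (k n : nat) (E : {set {set vtx k n}}) : Prop :=
  forall X : 'I_k -> {set vtx k n},
    (forall i, X i \subset part n i) ->
    p * (\prod_(i < k) #|X i|)%N%:R - mu * ((k * n)%N%:R ^+ k) <= (eH E X)%:R.

(* Vertices of K_k(m): (i, j), i : 'I_k part index, j : 'I_m.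
   Edges of K_k(m): [set (i, g i) | i] for g : 'I_k -> 'I_m. *)
Definition Kvtx (k m : nat) : finType := ('I_k * 'I_m)%type.

Definition K_copy (k n m : nat) (E : {set {set vtx k n}}) (phi : Kvtx k m -> vtx k n) : Prop :=
  injective phi /\
  forall g : {ffun 'I_k -> 'I_m}, [set phi (i, g i) | i : 'I_k] \in E.

Definition has_Kfactor (k n m : nat) (E : {set {set vtx k n}}) : Prop :=
  exists (t : nat) (phi : 'I_t -> Kvtx k m -> vtx k n),
    (forall a, K_copy E (phi a)) /\
    (forall a b, a != b -> [disjoint [set phi a v | v : Kvtx k m] & [set phi b v | v : Kvtx k m]]) /\
    (forall x : vtx k n, exists a v, phi a v = x).

(* Main.v *)
Require Import Defs.
From HB Require Import structures.
From mathcomp Require Import all_boot all_order all_algebra.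
From mathcomp Require Import reals.
From mathcomp Require Import zify ring lra.
Import Order.TTheory GRing.Theory Num.Theory.
Set Implicit Arguments.
Lemma in_part k n (i : 'I_k) (v : vtx k n) : (v \in part n i) = (v.1 == i).
Proof. by rewrite inE. Qed.

Lemma card_part k n (i : 'I_k) : #|part n i| = n.
Proof.
have -> : part n i = [set ((i, j) : vtx k n) | j : 'I_n].
  apply/setP => -[a b]; rewrite in_part /=; apply/eqP/imsetP => [->|[j _ [-> _]]] //.
  by exists b.
by rewrite card_imset ?card_ord // => a b [].
Qed.

Section PX.
Variables (k n : nat) (x : 'I_k -> vtx k n) (hx : forall i, x i \in part n i).

Lemma partx_inj : injective x.
Proof.
move=> i j e; have := hx i; have := hx j; rewrite !in_part e => /eqP -> /eqP //.
Qed.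

Lemma partx_card : #|[set x i | i : 'I_k]| = k.
Proof. by rewrite card_imset ?card_ord //; exact: partx_inj. Qed.

Lemma partx_part j : [set x i | i : 'I_k] :&: part n j = [set x j].
Proof.
apply/setP => v; rewrite !inE; apply/andP/eqP => [[/imsetP [i _ ->]]|->].
  by have := hx i; rewrite !in_part => /eqP -> /eqP ->.
by split; [apply/imsetP; exists j | rewrite -in_part].
Qed.

Lemma partx_legal : legal [set x i | i : 'I_k].
Proof. by apply/forallP => j; rewrite partx_part cards1. Qed.

Lemma partx_B (B : {set vtx k n}) :
  #|[set x i | i : 'I_k] :&: B| = #|[set i | x i \in B]|.
Proof.
have -> : [set x i | i : 'I_k] :&: B = x @: [set i | x i \in B].
  apply/setP => v; rewrite !inE; apply/andP/imsetP => [[/imsetP [i _ ->] hi]|[i]].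
    by exists i; rewrite ?inE.
  by rewrite inE => hi ->; split => //; apply/imsetP; exists i.
by rewrite card_imset //; exact: partx_inj.
Qed.
End PX.
Unset Implicit Arguments.

Lemma inj_B (I T : finType) (f : I -> T) (hf : injective f) (B : {set T}) :
  #|[set f i | i : I] :&: B| = (\sum_i (f i \in B))%N.
Proof.
have -> : [set f i | i : I] :&: B = f @: [set i | f i \in B].
  apply/setP => v; rewrite !inE; apply/andP/imsetP => [[/imsetP [i _ ->] hi]|[i]].
    by exists i; rewrite ?inE.
  by rewrite inE => hi ->; split => //; apply/imsetP; exists i.
rewrite card_imset // -sum1_card big_mkcond /=; apply: eq_bigr => i _.
by rewrite inE; case: (f i \in B).
Qed.

Lemma copy_even k n m (E : {set {set vtx k n}}) (B : {set vtx k n})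
  (hE : forall e, e \in E -> ~~ odd #|e :&: B|) (hm : (0 < m)%N)
  (phi : Kvtx k m -> vtx k n) :
  K_copy E phi -> ~~ odd #|[set phi v | v : Kvtx k m] :&: B|.
Proof.
move=> [phiI phiE].
pose j0 : 'I_m := Ordinal hm.
pose cnt (g : {ffun 'I_k -> 'I_m}) := (\sum_i (phi (i, g i) \in B))%N.
have hEv g : ~~ odd (cnt g).
  have := hE _ (phiE g); rewrite inj_B // => i1 i2 /phiI [] //.
have cl i j : (phi (i, j) \in B) = (phi (i, j0) \in B).
  pose g1 : {ffun 'I_k -> 'I_m} := [ffun => j0].
  pose g2 : {ffun 'I_k -> 'I_m} := [ffun i' => if i' == i then j else j0].
  have e1 := hEv g1; have e2 := hEv g2.
  rewrite /cnt (bigD1 i) //= in e1; rewrite /cnt (bigD1 i) //= in e2.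
  have er : (\sum_(i' | i' != i) (phi (i', g2 i') \in B))%N =
            (\sum_(i' | i' != i) (phi (i', g1 i') \in B))%N.
    by apply: eq_bigr => i' /negbTE hi; rewrite !ffunE hi.
  rewrite er !ffunE eqxx oddD in e2; rewrite ffunE oddD in e1.
  move: e1 e2; rewrite !oddb.
  by case: (phi (i, j) \in B); case: (phi (i, j0) \in B); case: odd.
rewrite inj_B //.
have -> : (\sum_(v : Kvtx k m) (phi v \in B))%N =
          (\sum_(i : 'I_k) \sum_(j : 'I_m) (phi (i, j) \in B))%N.
  by rewrite pair_bigA; apply: eq_bigr => -[].
have -> : (\sum_(i : 'I_k) \sum_(j : 'I_m) (phi (i, j) \in B))%N =
          (m * cnt [ffun => j0])%N.
  rewrite /cnt big_distrr /=; apply: eq_bigr => i _.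
  under eq_bigr do rewrite cl.
  by rewrite sum_nat_const card_ord ffunE.
by rewrite oddM negb_and hEv orbT.
Qed.

Lemma no_factor k n m (E : {set {set vtx k n}}) (B : {set vtx k n})
  (hE : forall e, e \in E -> ~~ odd #|e :&: B|) (hm : (0 < m)%N)
  (hB : odd #|B|) : ~ has_Kfactor m E.
Proof.
move=> [t [phi [hc [hd hcov]]]].
pose img a := [set phi a v | v : Kvtx k m].
have : #|B| = (\sum_(a < t) #|img a :&: B|)%N.
  rewrite -sum1_card.
  have h1 x : (\sum_(a < t) (x \in img a))%N = 1%N.
    have [a0 [v0 hv0]] := hcov x.
    rewrite (bigD1 a0) //= big1 => [|a ha].
      by rewrite -hv0 addn0 /img imset_f.
    apply/eqP; rewrite eqb0; apply/negP => hxa.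
    have := hd a a0 ha; rewrite disjoints_subset => /subsetP /(_ _ hxa).
    by rewrite inE -hv0 imset_f.
  rewrite (eq_bigr (fun x => \sum_(a < t) (x \in img a))%N); last by move=> x _; rewrite h1.
  rewrite exchange_big /=; apply: eq_bigr => a _.
  rewrite -sum1_card big_mkcond /= [in RHS]big_mkcond /=; apply: eq_bigr => x _.
  by rewrite inE andbC; case: (x \in B); case: (x \in img a).
move=> e; move: hB; rewrite e; apply/negP.
apply: (big_ind (fun n => ~~ odd n)) => // [x y hx hy|a _].
  by rewrite oddD negb_add (negbTE hx) (negbTE hy).
exact: copy_even hE hm _ (hc a).
Qed.


Lemma card_lt n b : (b <= n)%N -> #|[set j : 'I_n | (j < b)%N]| = b.
Proof.
move=> hb.
have -> : [set j : 'I_n | (j < b)%N] = [set widen_ord hb j | j : 'I_b].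
  apply/setP => j; rewrite inE; apply/idP/imsetP => [hj|[[j' hj'] _ ->]] //.
  by exists (Ordinal hj) => //; apply: val_inj.
rewrite card_imset ?card_ord // => x y /(congr1 val) e; exact: val_inj.
Qed.

Definition Bset k n (b : 'I_k -> nat) : {set vtx k n} := [set v : vtx k n | (nat_of_ord v.2 < b v.1)%N].
Arguments Bset {k} n b.

Lemma cardBpart k n b (hb : forall i, (b i <= n)%N) (i : 'I_k) :
  #|Bset n b :&: part n i| = b i.
Proof.
have -> : Bset n b :&: part n i = [set ((i, j) : vtx k n) | j in [set j : 'I_n | (j < b i)%N]].
  apply/setP => -[a c]; rewrite !inE /=; apply/andP/imsetP => [[h /eqP e]|[j]].
    by subst a; exists c; rewrite ?inE.
  by rewrite inE => h [-> ->]; split.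
by rewrite card_imset ?card_lt // => x y [].
Qed.

Lemma cardB k n b (hb : forall i, (b i <= n)%N) :
  #|Bset n b| = (\sum_(i < k) b i)%N.
Proof.
rewrite -sum1_card [LHS]big_mkcond /=.
transitivity (\sum_(i : 'I_k) \sum_(j : 'I_n) (if ((i,j) : vtx k n) \in Bset n b then 1 else 0))%N.
  by rewrite pair_bigA; apply: eq_bigr => -[].
apply: eq_bigr => i _; rewrite -(card_lt _ _ (hb i)) -sum1_card [RHS]big_mkcond /=.
by apply: eq_bigr => j _; rewrite !inE.
Qed.


Lemma cardS (T : finType) (A : {set T}) : #|A| = (\sum_x (x \in A))%N.
Proof. by rewrite -sum1_card big_mkcond; apply: eq_bigr => x _; case: (x \in A). Qed.

Lemma card_cover (T I : finType) (A C : {set T}) (D : I -> {set T}) :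
  (forall x, x \in A -> x \notin C -> exists i, x \in D i) ->
  (#|A| <= #|C| + \sum_i #|D i|)%N.
Proof.
move=> h; rewrite !cardS.
rewrite (eq_bigr (fun i => \sum_x (x \in D i))%N); last by move=> i _; rewrite cardS.
rewrite exchange_big -big_split /=; apply: leq_sum => x _.
case xA: (x \in A) => //; case xC: (x \in C) => //.
have [i hi] := h x xA (negbT xC).
by rewrite (bigD1 i) //= hi.
Qed.

Lemma card_box k (T : finType) (F : 'I_k -> {set T}) :
  #|[set x : {ffun 'I_k -> T} | [forall i, x i \in F i]]| = (\prod_i #|F i|)%N.
Proof.
have -> : #|[set x : {ffun 'I_k -> T} | [forall i, x i \in F i]]| =
          #|(family (fun i => mem (F i)) : simpl_pred {ffun 'I_k -> T})|.
  by apply: eq_card => x; rewrite inE; apply/forallP/familyP.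
rewrite card_family foldrE big_image /=.
by apply: eq_bigr.
Qed.

Definition Eset k n (B : {set vtx k n}) : {set {set vtx k n}} :=
 
  [set e : {set vtx k n} | (#|e| == k) && legal e && ~~ odd #|e :&: B|].
Arguments Eset {k n} B.

Lemma dense_nat k n (B : {set vtx k n}) (X : 'I_k -> {set vtx k n})
  (hX : forall i, X i \subset part n i) :
  (\prod_i #|X i| <= eH (Eset B) X + \sum_(i < k) #|B :&: part n i| * n ^ (k - 1))%N.
Proof.
pose G i j := if j == i then B :&: part n i else part n j.
rewrite -card_box.
apply: leq_trans (@card_cover _ _ _ [set x : {ffun 'I_k -> vtx k n} |
      [forall i, x i \in X i] && ([set x i | i : 'I_k] \in Eset B)]
    (fun i => [set x : {ffun 'I_k -> vtx k n} | [forall j, x j \in G i j]]) _) _.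
  move=> x; rewrite !inE => /forallP hx; rewrite (introT forallP hx) /=.
  have hp i : x i \in part n i by apply: (subsetP (hX i)); exact: hx.
  rewrite (partx_card _ hp) (partx_legal _ hp) eqxx /= negbK (partx_B _ hp) => /odd_gt0 /card_gt0P [i].
  rewrite inE => hi; exists i; rewrite inE; apply/forallP => j; rewrite /G.
  case: eqP => [->|_]; last exact: hp.
  by rewrite inE hi hp.
rewrite leq_add2l; apply: leq_sum => i _; rewrite card_box (bigD1 i) //= /G eqxx.
rewrite leq_mul2l; apply/orP; right.
rewrite (eq_bigr (fun _ => n)); last by move=> j /negbTE ->; rewrite card_part.
rewrite (eq_bigl (fun j => j \in predC1 i)) // prod_nat_const cardC1 card_ord.
by rewrite subn1.
Qed.


Lemma cardA k n (b : 'I_k -> nat) (hb : forall i, (b i <= n)%N) (i : 'I_k) :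
  #|~: Bset n b :&: part n i| = (n - b i)%N.
Proof.
have := cardsID (Bset n b) (part n i).
by rewrite setIC cardBpart // card_part setDE setIC; lia.
Qed.

Lemma deg_lb k n (b : 'I_k -> nat) (hb : forall i, (b i <= n)%N) (a c l : nat)
  (ha : forall i, (a <= n - b i)%N) (hc : forall i, (c <= b i)%N) (hca : (c <= a)%N)
  (S : {set vtx k n}) (hS : legal S) (hl : #|S| = l) (hkl : (l + 2 <= k)%N) :
  (c * a ^ (k - l - 1) <= deg (Eset (Bset n b)) S)%N.
Proof.
set B := Bset n b.
have legS u v : u \in S -> v \in S -> u.1 = v.1 -> u = v.
  move=> h1 h2 e; move/forallP: hS => /(_ u.1) /card_le1_eqP /(_ v u) H.
  by apply: H; rewrite !inE ?h1 ?h2 e eqxx.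
set I := [set v.1 | v in S].
have hI : #|I| = l by rewrite card_in_imset // => u v hu hv; exact: legS.
set J := ~: I.
have hJ : #|J| = (k - l)%N by rewrite cardsCs setCK card_ord hI.
have [j1 hj1] : exists j1, j1 \in J.
  by apply/set0Pn; rewrite -card_gt0 hJ; lia.
have [par epar] : {par | odd #|S :&: B| = par} := exist _ _ erefl.
pose F i := if i \in J then (if i == j1 then (if par then B else ~: B) else ~: B) :&: part n i
            else S :&: part n i.
set box := [set x : {ffun 'I_k -> vtx k n} | [forall i, x i \in F i]].
have hFp x : x \in box -> forall i, x i \in part n i.
  by rewrite inE => /forallP hx i; move: (hx i); rewrite /F; case: ifP => _ /setIP [].
have notI i : i \in J -> forall v, v \in S -> v.1 != i.
  by move=> hi v hv; apply/eqP => e; move: hi; rewrite in_setC -e imset_f.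
have hx1 x i : x \in box -> x i \in part n i -> (x i).1 = i.
  by move=> _; rewrite in_part => /eqP.
pose Y (x : {ffun 'I_k -> vtx k n}) := [set x i | i in J].
have key x : x \in box -> S :|: Y x = [set x i | i : 'I_k].
  move=> hx; have hp := hFp x hx; move: (hx); rewrite inE => /forallP hx'.
  apply/setP => v; apply/setUP/imsetP.
    case => [hv | /imsetP [i _ ->]]; last by exists i.
    exists v.1 => //; move: (hx' v.1); rewrite /F in_setC (imset_f _ hv) /=.
    case/setIP => hs hpart; apply: legS hv hs _.
    by move: hpart; rewrite in_part => /eqP ->.
  move=> [i _ ->]; case hiJ: (i \in J); first by right; apply/imsetP; exists i.
  by left; move: (hx' i); rewrite /F hiJ => /setIP [].
have hSY x : x \in box -> S :&: Y x = set0.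
  move=> hx; apply/setP => v; rewrite !inE; apply/negbTE/negP => /andP [hv /imsetP [i hi ev]].
  have := notI i hi v hv; rewrite ev (hx1 x i hx (hFp x hx i)) eqxx //.
have cY x : x \in box -> #|Y x| = (k - l)%N.
  move=> hx; rewrite card_in_imset ?hJ // => i j _ _; exact: (partx_inj _ (hFp x hx)).
have YB x : x \in box -> #|Y x :&: B| = par.
  move=> hx; move: (hx); rewrite inE => /forallP hx'.
  have -> : Y x :&: B = [set v | (v == x j1) && par].
    apply/setP => v; rewrite in_setI [in RHS]inE; apply/andP/andP.
      move=> [/imsetP [i hi ->] hB]; move: (hx' i); rewrite /F hi.
      case: (eqVneq i j1) hB => [->|_] hB; last by rewrite in_setI in_setC hB.
      by case: (boolP par) => hp; rewrite ?eqxx ?in_setI ?in_setC ?hB.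
    move=> [/eqP -> hp]; split; first by apply/imsetP; exists j1.
    by move: (hx' j1); rewrite /F hj1 eqxx hp => /setIP [].
  case: (boolP par) => hp; last first.
    rewrite (_ : [set v | _] = set0) ?cards0 //; apply/setP => v; by rewrite !inE andbF.
  by rewrite (_ : [set v | _] = [set x j1]) ?cards1 //; apply/setP => v; rewrite !inE andbT.
have inE' x : x \in box -> Y x \in [set S' : {set vtx k n} | (#|S'| == k - #|S|)%N && (S :|: S' \in Eset B)].
  move=> hx; have hp := hFp x hx.
  rewrite inE cY // hl eqxx /= key // inE (partx_card _ hp) (partx_legal _ hp) eqxx /=.
  rewrite -key // setIUl cardsU setIACA hSY // set0I cards0 subn0.
  by rewrite YB // oddD epar oddb addbb.
have injY : {in box &, injective Y}.
  move=> x y hx hy e; apply/ffunP => i; have hpx := hFp x hx; have hpy := hFp y hy.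
  case hiJ: (i \in J).
    have : x i \in Y y by rewrite -e; apply/imsetP; exists i.
    case/imsetP => j hj ev; rewrite ev; congr (y _).
    by rewrite -[RHS](hx1 x i hx (hpx i)) ev (hx1 y j hy (hpy j)).
  move: (hx) (hy); rewrite !inE => /forallP /(_ i) hxi /forallP /(_ i) hyi.
  move: hxi hyi; rewrite /F hiJ => /setIP [hxs hxp] /setIP [hys hyp].
  by apply: legS => //; rewrite (hx1 x i hx hxp) (hx1 y i hy hyp).
have hsub : [set Y x | x in box] \subset
   [set S' : {set vtx k n} | (#|S'| == k - #|S|)%N && (S :|: S' \in Eset B)].
  by apply/subsetP => S' /imsetP [x hx ->]; exact: inE' x hx.
rewrite /deg; apply: (leq_trans _ (subset_leq_card hsub)).
rewrite card_in_imset // /box card_box (bigD1 j1) //=.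
apply: leq_mul.
  rewrite /F hj1 eqxx; case: (boolP par) => _.
    by rewrite /B cardBpart.
  by rewrite cardA //; apply: leq_trans hca (ha j1).
have -> : (k - l - 1 = #|J :\ j1|)%N by move: hJ; rewrite (cardsD1 j1) hj1; lia.
rewrite -prod_nat_const.
rewrite (eq_bigl (fun i => (i != j1) && (i \in J))); last by move=> i; rewrite in_setD1.
rewrite big_mkcondr /=; apply: leq_prod => i hi; rewrite /F; case: ifP => hiJ.
  by rewrite (negbTE hi) cardA.
rewrite card_gt0; apply/set0Pn.
move: hiJ; rewrite in_setC => /negbFE /imsetP [v hv ->]; exists v.
by rewrite in_setI hv in_part eqxx.
Qed.

Local Open Scope ring_scope.

Theorem theorem1p3 (R : realType) (p mu : R) (k l m : nat) :
  0 < p < 1 -> 0 < mu -> (3 <= k)%N -> (1 <= l)%N -> (l <= k - 2)%N -> (2 <= m)%N ->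
  exists (n0 : nat) (alpha : R), 0 < alpha /\
    forall n : nat, (n0 <= n)%N ->
      exists E : {set {set vtx k n}},
        kpartite_kgraph E /\
        dense p mu E /\
        (forall S : {set vtx k n}, legal S -> #|S| = l ->
           alpha * (n%:R ^+ (k - l)) <= (deg E S)%:R) /\
        ~ has_Kfactor m E.
Proof.
move=> /andP [p0 p1] mu0 k3 l1 lk m2.
have [Q hQ] : exists Q : nat, 3 < mu * Q%:R.
  exists (Num.Def.archi_bound (3 / mu)).
  have := @archi_boundP R (3 / mu); rewrite divr_ge0 ?ler0n ?ltW //.
  by move=> /(_ isT); rewrite ltr_pdivrMr // mulrC.
pose q := maxn 6 Q.
have q6 : (6 <= q)%N by rewrite leq_maxl.
have hq : 3 < mu * q%:R.
  apply: (lt_le_trans hQ); rewrite ler_pM2l // ler_nat leq_maxr //.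
exists (2 * q)%N, ((q * 2 ^ k)%N%:R)^-1; split.
  by rewrite invr_gt0 ltr0n muln_gt0 expn_gt0; apply/andP; split; lia.
move=> n hn.
pose c := (n %/ q)%N.
have F1 : ((2 * c + 1) * q <= 3 * n)%N.
  have := leq_divM n q; rewrite -/c; lia.
have F2 : (n <= 2 * c * q)%N.
  have := ltn_ceil n (_ : (0 < q)%N); rewrite -/c; lia.
have F3 : (2 * (2 * c + 1) <= n)%N by nia.
pose b (i : 'I_k) := (2 * c + (nat_of_ord i == 0%N))%N.
have hb i : (b i <= n)%N by rewrite /b; case: (_ == _); lia.
pose B := Bset n b.
exists (Eset B); split; [|split; [|split]].
- by move=> e; rewrite inE => /andP [/andP [/eqP -> ->] _].
- move=> X hX.
  have hd := @dense_nat k n B X hX.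
  move: hd; set P := (\prod_i #|X i|)%N; set e := eH (Eset B) X.
  set D := (\sum_(i < k) _)%N => hd.
  have hD : (D <= k * ((2 * c + 1) * n ^ (k - 1)))%N.
    have -> : (k * ((2 * c + 1) * n ^ (k - 1)) = \sum_(i < k) ((2 * c + 1) * n ^ (k - 1)))%N.
      by rewrite sum_nat_const card_ord.
    rewrite /D; apply: leq_sum => i _; rewrite /B cardBpart // leq_mul2r /b; apply/orP; right.
    by case: (_ == _); lia.
  have hnk : (n * n ^ (k - 1) = n ^ k)%N by rewrite -expnS subn1 prednK //; lia.
  have hDq : (D * q <= 3 * (k * n ^ k))%N.
    apply: (leq_trans (leq_mul hD (leqnn q))).
    rewrite -hnk; move: F1; set z := (n ^ (k - 1))%N => F1'.
    have := leq_mul F1' (leqnn (k * z)); rewrite mulnA. nia.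
  have hK : (k * n ^ k <= (k * n) ^ k)%N.
    rewrite expnMn leq_mul2r; apply/orP; right.
    by rewrite -{1}(expn1 k) leq_pexp2l //; lia.
  have hDr : (D%:R : R) <= mu * (k * n ^ k)%N%:R.
    have q0 : (0 : R) < q%:R by rewrite ltr0n; lia.
    rewrite -(ler_pM2r q0).
    apply: (le_trans (_ : _ <= (3 * (k * n ^ k))%N%:R)); first by rewrite -natrM ler_nat.
    rewrite natrM mulrAC; apply: ler_wpM2r; first exact: ler0n.
    exact: ltW.
  have hKr : ((k * n ^ k)%N%:R : R) <= (k * n)%N%:R ^+ k by rewrite -natrX ler_nat.
  have hPe : (P%:R : R) <= e%:R + D%:R by rewrite -natrD ler_nat.
  have hpP : p * P%:R <= P%:R by apply: ler_piMl; [exact: ler0n | exact: ltW].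
  have hmu : mu * (k * n ^ k)%N%:R <= mu * (k * n)%N%:R ^+ k by rewrite ler_pM2l.
  lra.
- move=> S hS hl.
  pose a := (n - (2 * c + 1))%N.
  have hdeg := @deg_lb k n b hb a (2 * c) l
    (fun i => ltac:(rewrite /b /a; case: (_ == _); lia))
    (fun i => leq_addr _ _) (ltac:(rewrite /a; lia)) S hS hl (ltac:(lia)).
  set r := (k - l - 1)%N in hdeg.
  have hr : (k - l = r.+1)%N by rewrite /r; lia.
  have r0 : (0 < r)%N by rewrite /r; lia.
  have hN : (n ^ (k - l) <= (2 * c * a ^ r) * (q * 2 ^ k))%N.
    rewrite hr expnS.
    have h1 : (n ^ r <= 2 ^ r * a ^ r)%N by rewrite -expnMn leq_exp2r //; rewrite /a; lia.
    have h2 : (2 ^ r <= 2 ^ k)%N by rewrite leq_pexp2l //; rewrite /r; lia.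
    apply: (leq_trans (leq_mul F2 h1)).
    move: h2; set u := (2 ^ r)%N; set v := (a ^ r)%N; set w := (2 ^ k)%N => h2.
    have := leq_mul (leqnn (2 * c * v * q)) h2; nia.
  have Q0 : (0 : R) < (q * 2 ^ k)%N%:R by rewrite ltr0n muln_gt0 expn_gt0; apply/andP; split; lia.
  rewrite mulrC -natrX ler_pdivrMr // -natrM ler_nat.
  exact: (leq_trans hN (leq_mul hdeg (leqnn _))).
- apply: (@no_factor k n m (Eset B) B) => //; first by move=> e; rewrite inE => /andP [].
    lia.
  rewrite /B cardB // big_split /= sum_nat_const card_ord.
  case: k k3 {lk b hb B} => // k' _; rewrite big_ord_recl /= big1 ?addn0.
    by rewrite oddD !oddM /= andbF.
  by move=> i _.
Qed.
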